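(* Let $r,s\in\mathbb{F}_2((x^{-1}))$ with $\deg(r)\ge0$ and $\deg(s)\ge0$. If $r\preccurlyeq_x s$, then $S(r)\preccurlyeq_x S(s)$. In particular, $\tau(r)\le\tau(s)$.
   Context: $\mathbb{F}_2((x^{-1}))$ is the field of formal series $\sum_{z\in\mathbb{Z}}a_zx^z$, $a_z\in\mathbb{F}_2$, with $a_z\ne0$ for only finitely many positive $z$; $\deg$ is the largest exponent with nonzero coefficient. The polynomial part is $[\sum a_zx^z]=\sum_{z\ge0}a_zx^z$. $S(r)=\frac{r}{x+1}$ if $[r](1)=0$ and $S(r)=\frac{xr}{x+1}$ if $[r](1)=1$. For $\deg(r)\ge0$, $\tau(r)$ is the least $k\in\mathbb{N}$ with $[S^k(r)]=1$. We write $r\preccurlyeq_x s$ if there exists an integer $n\ge0$ with $x^nr=s$. *)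

(* Defs.v *)
(* F_2 is modelled by bool with addition = xor (addb). *)
From mathcomp Require Import all_boot all_order all_algebra.
From mathcomp Require Import zify.
Set Implicit Arguments. Unset Strict Implicit. Unset Printing Implicit Defensive.
Import Order.TTheory GRing.Theory Num.Theory.
Local Open Scope ring_scope.

(* An element of F_2((x^-1)): coefficient function z |-> a_z, together with an
   upper bound on the exponents carrying a nonzero coefficient. *)
Record lseries := LSeries {
  coef : int -> bool;
  bnd : int;
  coefP : forall z : int, bnd < z -> coef z = false }.

Definition lseq (r s : lseries) : Prop := forall z : int, coef r z = coef s z.

Lemma mulX_subproof (r : lseries) :
  forall z : int, bnd r + 1 < z -> coef r (z - 1) = false.
Proof. by move=> z hz; apply: coefP; lia. Qed.
Definition mulX (r : lseries) : lseries :=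
  LSeries (@mulX_subproof r).

Definition mulXn (n : nat) (r : lseries) : lseries := iter n mulX r.

Lemma mulX1_subproof (r : lseries) :
  forall z : int, bnd r + 1 < z -> coef r (z - 1) (+) coef r z = false.
Proof.
move=> z hz; rewrite !coefP //; lia.
Qed.
Definition mulX1 (r : lseries) : lseries := LSeries (@mulX1_subproof r).

(* division by x+1: since 1/(x+1) = x^-1 + x^-2 + ..., the coefficient of x^z
   in r/(x+1) is the sum over j > z of a_j (a finite sum, j <= bnd r). *)
Lemma divX1_subproof (r : lseries) :
  forall z : int, bnd r < z ->
    \big[addb/false]_(k < `|bnd r - z|%N) coef r (z + (k.+1)%:Z) = false.
Proof.
move=> z hz; apply: big1 => k _; apply: coefP.
lia.
Qed.
Definition divX1 (r : lseries) : lseries := LSeries (@divX1_subproof r).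

Lemma divX1K (r : lseries) : lseq (mulX1 (divX1 r)) r.
Proof.
move=> z /=.
have H : forall w : int, bnd r <= w ->
   \big[addb/false]_(k < `|bnd r - w|%N) coef r (w + (k.+1)%:Z) = false.
  by move=> w hw; apply: big1 => k _; apply: coefP; lia.
case: (leP (bnd r) (z - 1)) => hz.
  by rewrite !H // ?coefP //; lia.
have -> : absz (bnd r - (z - 1))%R = (absz (bnd r - z)%R).+1 by lia.
rewrite big_ord_recl /=.
have -> : z - 1 + Posz 1 = z by lia.
under eq_bigr => i _ do have -> : z - 1 + Posz (bump 0 i).+1 = z + Posz i.+1 by rewrite /bump /=; lia.
by rewrite -addbA addbb addbF.
Qed.

(* [r](1): the polynomial part of r evaluated at 1 (sum of a_z, 0 <= z) *)
Definition pp_at1 (r : lseries) : bool :=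
  \big[addb/false]_(k < (`|bnd r|%N).+1) coef r (k%:Z).

(* [r] = 1 : a_0 = 1 and a_z = 0 for all 0 < z (z <= bnd r suffices) *)
Definition pp_is_one (r : lseries) : bool :=
  coef r 0 && all (fun k : nat => ~~ coef r ((k.+1)%:Z)) (iota 0 `|bnd r|%N).

Definition S (r : lseries) : lseries :=
  if pp_at1 r then divX1 (mulX r) else divX1 r.

Definition deg_ge0 (r : lseries) : Prop := exists z : int, 0 <= z /\ coef r z.

Definition precx (r s : lseries) : Prop := exists n : nat, lseq (mulXn n r) s.

(* tau(r): least k with [S^k(r)] = 1 (0 by convention if no such k exists) *)
From Stdlib Require Import ClassicalEpsilon.
Definition tau (r : lseries) : nat :=
  match excluded_middle_informative (exists k, pp_is_one (iter k S r)) with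
  | left h => ex_minn h
  | right _ => 0%N
  end.

(* Main.v *)
Require Import Defs.
From mathcomp Require Import all_boot all_order all_algebra zify.
From Stdlib Require Import Classical ClassicalEpsilon.
Set Implicit Arguments. Unset Strict Implicit. Unset Printing Implicit Defensive.
Import Order.TTheory GRing.Theory Num.Theory.
Local Open Scope ring_scope.

Lemma coef_mulXn n r z : coef (mulXn n r) z = coef r (z - n%:Z).
Proof.
elim: n z => [|n IH] z; first by rewrite /= subr0.
rewrite /mulXn iterS -/(mulXn n r) /= IH; congr (coef r _); lia.
Qed.

Definition D r z := coef (divX1 r) z.

Lemma D_sum r z (M : nat) : bnd r - z <= M%:Z ->
  D r z = \big[addb/false]_(k < M) coef r (z + (k.+1)%:Z).
Proof.
move=> hM; rewrite /D /=.
case: (leP (bnd r) z) => hz.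
  rewrite big1; last by move=> k _; apply: coefP; lia.
  by rewrite big1 // => k _; apply: coefP; lia.
have hn : (`|bnd r - z| <= M)%N by lia.
rewrite (big_ord_widen _ (fun k : nat => coef r (z + (k.+1)%:Z)) hn) big_mkcond /=.
apply: eq_bigr => k _; case: ifP => // hk.
by rewrite coefP //; lia.
Qed.

Lemma D_rec r z : D r z = coef r (z + 1) (+) D r (z + 1).
Proof.
rewrite (@D_sum r z (`|bnd r - z|%N).+1); last by lia.
rewrite (@D_sum r (z+1) (`|bnd r - z|%N)); last by lia.
rewrite big_ord_recl /=; congr (_ (+) _).
apply: eq_bigr => k _; congr (coef r _); rewrite /bump /=; lia.
Qed.

Lemma D_zero r z : (forall j, z < j -> coef r j = false) -> D r z = false.
Proof. by move=> h; rewrite /D /=; apply: big1 => k _; apply: h; lia. Qed.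

Lemma pp_at1E r : pp_at1 r = D r (-1).
Proof.
rewrite (@D_sum r (-1) (`|bnd r|%N).+1); last by lia.
rewrite /pp_at1; apply: eq_bigr => k _; congr (coef r _); lia.
Qed.

Lemma uniq_rec (a f g : int -> bool) (B : int) :
  (forall z, f z = a (z + 1) (+) f (z + 1)) ->
  (forall z, g z = a (z + 1) (+) g (z + 1)) ->
  (forall z, B < z -> f z = false) -> (forall z, B < z -> g z = false) ->
  forall z, f z = g z.
Proof.
move=> hf hg f0 g0.
have H : forall n : nat, f (B + 1 - n%:Z) = g (B + 1 - n%:Z).
  elim=> [|n IH]; first by rewrite f0 ?g0 //; lia.
  rewrite hf hg.
  have -> : B + 1 - (n.+1)%:Z + 1 = B + 1 - n%:Z by lia.
  by rewrite IH.
move=> z; case: (ltP B z) => hz; first by rewrite f0 ?g0.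
have -> : z = B + 1 - Posz (absz (B + 1 - z)%R) by lia.
exact: H.
Qed.

Lemma D_shift n r z : D (mulXn n r) z = D r (z - n%:Z).
Proof.
apply: (@uniq_rec (coef (mulXn n r)) _ (fun z => D r (z - n%:Z)) (bnd r + n%:Z)).
- exact: D_rec.
- move=> w /=; rewrite D_rec coef_mulXn.
  have -> : w - n%:Z + 1 = w + 1 - n%:Z by lia. by [].
- move=> w hw; apply: D_zero => j hj; rewrite coef_mulXn coefP //; lia.
- move=> w hw; apply: D_zero => j hj; rewrite coefP //; lia.
Qed.

Lemma D_ext a b z : (forall w, coef a w = coef b w) -> D a z = D b z.
Proof.
move=> h.
apply: (@uniq_rec (coef a) _ (D b) (Posz (absz (bnd a)) + Posz (absz (bnd b)))).
- exact: D_rec.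
- by move=> w; rewrite D_rec h.
- move=> w hw; apply: D_zero => j hj; rewrite coefP //.
  lia.
- move=> w hw; apply: D_zero => j hj; rewrite coefP //.
  lia.
Qed.

Lemma coef_S u z : coef (S u) z = if pp_at1 u then D u (z - 1) else D u z.
Proof.
rewrite /S; case: ifP => _ //.
by rewrite -/(D _ _) (D_shift 1).
Qed.

Lemma ppP u : pp_is_one u <-> (coef u 0 /\ forall z, 0 < z -> coef u z = false).
Proof.
rewrite /pp_is_one; split.
  case/andP=> h0 /allP ha; split => // z hz.
  case: (leP z (bnd u)) => hb; last by apply: coefP.
  have := ha (`|z - 1|%N); rewrite mem_iota add0n.
  have -> : ((`|z - 1|%N).+1)%:Z = z by lia.
  by move=> H; apply/negbTE/H; apply/andP; split; lia.
case=> h0 ha; rewrite h0 /=; apply/allP => k _.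
by rewrite ha //; lia.
Qed.

Lemma S_shift n u v : (forall z, coef v z = coef u (z - n%:Z)) ->
  exists m : nat, forall z, coef (S v) z = coef (S u) (z - m%:Z).
Proof.
move=> h.
have hv : forall w, D v w = D u (w - n%:Z).
  by move=> w; rewrite -D_shift; apply: D_ext => y; rewrite coef_mulXn h.
have ev : pp_at1 v = D u (-1 - n%:Z) by rewrite pp_at1E hv.
case: n h hv ev => [|n] h hv ev.
  exists 0%N => z; rewrite !coef_S ev pp_at1E !hv.
  by case: ifP => _; congr (D u _); lia.
case Ev: (pp_at1 v); case Eu: (pp_at1 u).
- exists n.+1 => z; rewrite !coef_S Ev Eu hv; congr (D u _); lia.
- exists n.+2 => z; rewrite !coef_S Ev Eu hv; congr (D u _); lia.
- exists n => z; rewrite !coef_S Ev Eu hv; congr (D u _); lia.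
- exists n.+1 => z; rewrite !coef_S Ev Eu hv; congr (D u _); lia.
Qed.

Lemma iter_shift n r s : (forall z, coef s z = coef r (z - n%:Z)) ->
  forall k, exists m : nat, forall z, coef (iter k S s) z = coef (iter k S r) (z - m%:Z).
Proof.
move=> h; elim=> [|k [m hm]]; first by exists n.
have [m' hm'] := S_shift hm; exists m' => z.
by rewrite !iterS hm'.
Qed.

Lemma deg_S u : deg_ge0 u -> ~~ pp_is_one u -> deg_ge0 (S u).
Proof.
move=> [z [hz0 hz]] hn.
have exP : exists n : nat, coef u n%:Z by exists `|z|%N; have -> : (`|z|%N)%:Z = z by lia.
have bP : forall n : nat, coef u n%:Z -> (n <= `|bnd u|)%N.
  move=> n hn'; case: (leP (n%:Z) (bnd u)) => hb; first lia.
  by rewrite coefP in hn'.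
case: (ex_maxnP exP bP) => d hd hmax.
have above : forall j, d%:Z < j -> coef u j = false.
  move=> j hj; apply/negbTE/negP => hc.
  have hj' : coef u (`|j|%N)%:Z by have -> : (`|j|%N)%:Z = j by lia.
  have := hmax _ hj'; lia.
case E: (pp_at1 u).
  exists d%:Z; split; first lia.
  rewrite coef_S E D_rec.
  have -> : d%:Z - 1 + 1 = d%:Z by lia.
  by rewrite (D_zero above) hd.
case: d hd hmax above => [|d] hd hmax above.
  by exfalso; move/negP: hn; apply; apply/ppP; split => // j hj; apply: above.
exists d%:Z; split; first lia.
rewrite coef_S E D_rec (@D_zero u (d%:Z + 1)); last by move=> j hj; apply: above; lia.
have -> : d%:Z + 1 = (d.+1)%:Z by lia.
by rewrite hd.
Qed.

Lemma deg_iter t j : deg_ge0 t ->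
  (forall i, (i < j)%N -> ~~ pp_is_one (iter i S t)) -> deg_ge0 (iter j S t).
Proof.
move=> ht; elim: j => [|j IH] h //.
rewrite iterS; apply: deg_S; first by apply: IH => i hi; apply: h; lia.
by apply: h.
Qed.

Lemma zero_S (N : int) u : (forall z, N < z -> coef u z = false) ->
  forall z, N < z -> coef (S u) z = false.
Proof.
move=> h z hz; rewrite coef_S; case: ifP => _; apply: D_zero => j hj; apply: h; lia.
Qed.

Lemma zero_iter (N : int) u : (forall z, N < z -> coef u z = false) ->
  forall k z, N < z -> coef (iter k S u) z = false.
Proof.
move=> h; elim=> [|k IH] //=; exact: zero_S.
Qed.

Lemma caseA n t : (forall z, n%:Z < z -> coef t z = false) ->
  (forall k, (k <= n)%N -> pp_at1 (iter k S t)) -> pp_is_one (iter n.+1 S t).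
Proof.
move=> hz he.
have rec : forall k, (k <= n)%N -> forall z,
    coef (iter k.+1 S t) (z + 1) = coef (iter k.+1 S t) z (+) coef (iter k S t) z.
  move=> k hk z; rewrite iterS !coef_S he //.
  have -> : z + 1 - 1 = z by [lia].
  rewrite (D_rec _ (z - 1)).
  have -> : z - 1 + 1 = z by [lia].
  by case: (coef _ z); case: (D _ z).
have c0 : forall k, (k <= n)%N -> coef (iter k.+1 S t) 0.
  by move=> k hk; rewrite iterS coef_S he // -pp_at1E he.
have P : forall j k, (j.+1 < k)%N -> (k <= n.+1)%N -> coef (iter k S t) (j.+1)%:Z = false.
  elim=> [|j IH] [|k] hk hkn; try lia.
    have -> : (1%N)%:Z = 0 + 1 by [].
    by rewrite rec; [rewrite c0 // -[k]prednK ?c0 //; lia | lia].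
  have -> : (j.+2)%:Z = (j.+1)%:Z + 1 by lia.
  rewrite rec; last lia.
  rewrite (IH k.+1); [|lia|lia]. rewrite (IH k) //; lia.
apply/ppP; split; first exact: c0.
move=> z hz0; case: (leP z n%:Z) => hzn; last by apply: (zero_iter hz).
have -> : z = ((`|z|%N).-1.+1)%:Z by lia.
apply: P; lia.
Qed.

Definition term t := exists k, pp_is_one (iter k S t).

Lemma step n t : deg_ge0 t -> (forall z, n%:Z < z -> coef t z = false) ->
  term t \/ exists k, deg_ge0 (iter k S t) /\
     (forall z, n%:Z - 1 < z -> coef (iter k S t) z = false).
Proof.
move=> ht hz.
case: (boolP (all (fun k => pp_at1 (iter k S t)) (iota 0 n.+1))) => [/allP ha|].
  left; exists n.+1; apply: caseA => // k hk; apply: ha; rewrite mem_iota; lia.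
case/allPn => k; rewrite mem_iota => hk he.
case: (classic (exists j, (j <= k)%N /\ pp_is_one (iter j S t))) => [[j [_ hj]]|hno].
  by left; exists j.
right; exists k.+1; split.
  apply: deg_iter => // i hi; apply/negP => hp; apply: hno; exists i; split => //; lia.
move=> z hz'; rewrite iterS coef_S (negbTE he); apply: D_zero => j hj.
apply: (zero_iter hz); lia.
Qed.

Lemma term_all n : forall t, deg_ge0 t -> (forall z, n%:Z < z -> coef t z = false) -> term t.
Proof.
elim: n => [|n IH] t ht hz; case: (step ht hz) => // [[k [hd hk]]].
  exfalso; case: hd => w [hw0 hw]; by rewrite hk in hw; lia.
have [K hK] := IH _ hd (fun z hz' => hk z ltac:(lia)).
by exists (K + k)%N; rewrite iterD.
Qed.

Lemma term_deg t : deg_ge0 t -> term t.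
Proof.
move=> ht; apply: (@term_all `|bnd t|%N) => // z hz; apply: coefP; lia.
Qed.

Lemma implic n r s k : deg_ge0 r -> (forall z, coef s z = coef r (z - n%:Z)) ->
  pp_is_one (iter k S s) -> exists j, (j <= k)%N /\ pp_is_one (iter j S r).
Proof.
move=> hr h hp.
case: (classic (exists j, (j <= k)%N /\ pp_is_one (iter j S r))) => // hno.
exfalso.
have hd : deg_ge0 (iter k S r).
  apply: deg_iter => // i hi; apply/negP => hp'; apply: hno; exists i; split => //; lia.
have [m hm] := iter_shift h k.
case/ppP: hp => h0 ha.
case: hd => w [hw0 hw].
case: (ltP 0 (w + m%:Z)) => hwm.
  have := ha _ hwm; rewrite hm.
  have -> : w + m%:Z - m%:Z = w by lia. by rewrite hw.
apply: hno; exists k; split => //; apply/ppP; split.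
  by rewrite -(_ : 0 - m%:Z = 0) -?hm //; lia.
move=> z hz; rewrite -(_ : z - m%:Z = z) -?hm ?ha //; lia.
Qed.

Theorem lemma2p4 (r s : lseries) :
  deg_ge0 r -> deg_ge0 s -> precx r s ->
  precx (S r) (S s) /\ (tau r <= tau s)%N.
Proof.
move=> hr hs [n hn].
have h : forall z, coef s z = coef r (z - n%:Z) by move=> z; rewrite -hn coef_mulXn.
split.
  have [m hm] := S_shift h; exists m => z; by rewrite coef_mulXn hm.
have ts := term_deg hs.
rewrite /tau; case: excluded_middle_informative => [hr'|hr'] //.
case: excluded_middle_informative => [hs'|hs'] //.
case: (ex_minnP hs') => ks hks _.
have [j [hj hjr]] := implic hr h hks.
case: (ex_minnP hr') => kr _ hmin.
have := hmin _ hjr; lia.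
Qed.
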